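(* Let $A>0$, $\lambda>0$, $\xi=\sqrt{1-8\lambda}$ (principal branch), and let $(\mathfrak{M}_n)_{n\ge0}$ be defined by $\mathfrak{M}_0=1$ and $\big(\frac{n(n-1)}{2}+\lambda\big)\mathfrak{M}_n+n\mathfrak{M}_{n-1}=\lambda A^n$ for $n\in\mathbb{N}$. Then for every $n\in\mathbb{N}\cup\{0\}$, $$\mathfrak{M}_n=\frac{(-2)^n\,n!}{\big(\tfrac12+\tfrac{\xi}{2}\big)_n\big(\tfrac12-\tfrac{\xi}{2}\big)_n}\sum_{k=0}^{n}\Big(-\tfrac12+\tfrac{\xi}{2}\Big)_k\Big(-\tfrac12-\tfrac{\xi}{2}\Big)_k\frac{1}{k!}\Big(-\frac{A}{2}\Big)^k .$$ In particular $\mathfrak{M}_1=A-1/\lambda$.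
   Context: Pochhammer symbol: $(z)_0=1$, $(z)_n=z(z+1)\cdots(z+n-1)$ for $n\in\mathbb{N}$. The principal branch convention means $\xi\in[0,1)$ if $\lambda\le1/8$ and $\xi$ is purely imaginary if $\lambda>1/8$. *)

(* Defs.v *)
(* complex numbers rendered as an arbitrary numClosedFieldType. *)
From HB Require Import structures.
From mathcomp Require Import all_boot all_order all_algebra.
Set Implicit Arguments. Unset Strict Implicit. Unset Printing Implicit Defensive.
Import Order.TTheory GRing.Theory Num.Theory.
Local Open Scope ring_scope.

Definition poch {R : nzRingType} (z : R) (n : nat) : R :=
  \prod_(i < n) (z + i%:R).

(* Main.v *)
Require Import Defs.
From HB Require Import structures.
From mathcomp Require Import all_boot all_order all_algebra.
From mathcomp Require Import ring lra.
Import Order.TTheory GRing.Theory Num.Theory.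
Local Open Scope ring_scope.

Theorem mainTheorem2 (C : numClosedFieldType) (A lam : C) (M : nat -> C)
  (hA : 0 < A) (hlam : 0 < lam)
  (hM0 : M 0%N = 1)
  (hrec : forall n : nat,
      ((n.+1)%:R * n%:R / 2 + lam) * M n.+1 + (n.+1)%:R * M n = lam * A ^+ n.+1) :
  let xi := sqrtC (1 - 8 * lam) in
  (forall n : nat,
     M n = (-2) ^+ n * (n`!)%:R
             / (poch (2^-1 + xi / 2) n * poch (2^-1 - xi / 2) n)
           * \sum_(k < n.+1)
               poch (- 2^-1 + xi / 2) k * poch (- 2^-1 - xi / 2) k
               / (k`!)%:R * (- A / 2) ^+ k)
  /\ M 1%N = A - lam^-1.
Proof.
move=> xi.
have natrS : forall m : nat, (m.+1)%:R = m%:R + 1 :> C by move=> m; rewrite -natr1.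
have lam0 : lam != 0 by rewrite gt_eqF.
have two0 : (2 : C) != 0 by rewrite pnatr_eq0.
have hxi : xi ^+ 2 = 1 - 8 * lam by rewrite /xi sqrtCK.
set a := 2^-1 + xi / 2; set b := 2^-1 - xi / 2.
set P := fun n : nat => \prod_(i < n) (lam + (i.+1)%:R * i%:R / 2).
have coef0 : forall n : nat, lam + (n.+1)%:R * n%:R / 2 != 0.
  move=> n; rewrite gt_eqF // ltr_pwDl // divr_ge0 // mulr_ge0 //.
have P0 : forall n, P n != 0.
  move=> n; rewrite /P prodf_seq_neq0; apply/allP => i _; exact: coef0.
have Q : forall n : nat, (a + n%:R) * (b + n%:R) = 2 * (lam + (n.+1)%:R * n%:R / 2).
  move=> n; rewrite /a /b natrS.
  have -> : (2^-1 + xi / 2 + n%:R) * (2^-1 - xi / 2 + n%:R)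
            = (2^-1 + n%:R) ^+ 2 - xi ^+ 2 / 4 by field.
  rewrite hxi; by field.
have PQ : forall n, poch a n * poch b n = 2 ^+ n * P n.
  elim=> [|n IH]; first by rewrite /poch /P !big_ord0 !mulr1.
  rewrite /poch /P !big_ord_recr /= -/(poch a n) -/(poch b n).
  rewrite mulrACA IH Q exprSr -/(P n); ring.
have cQ : forall n, poch (- 2^-1 + xi / 2) n.+1 * poch (- 2^-1 - xi / 2) n.+1
                    = 2 * lam * 2 ^+ n * P n.
  elim=> [|n IH].
    rewrite /poch /P !big_ord_recr !big_ord0 /= !mul1r expr0 mulr1.
    have -> : (- 2^-1 + xi / 2 + 0%:R) * (- 2^-1 - xi / 2 + 0%:R)
              = 4^-1 - xi ^+ 2 / 4 by field.
    rewrite hxi; by field.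
  rewrite /poch big_ord_recr /= [X in _ * X]big_ord_recr /=.
  rewrite mulrACA -/(poch (- 2^-1 + xi / 2) n.+1) -/(poch (- 2^-1 - xi / 2) n.+1) IH.
  have -> : (- 2^-1 + xi / 2 + (n.+1)%:R) * (- 2^-1 - xi / 2 + (n.+1)%:R)
            = (a + n%:R) * (b + n%:R) by rewrite /a /b natrS; field.
  rewrite Q /P big_ord_recr /= -/(P n) exprSr; move: (P n) (2 ^+ n : C) => p t; ring.
split.
  elim=> [|n IH].
    rewrite hM0 /poch !big_ord0 big_ord_recr big_ord0 /= (_ : (0`!)%:R = 1 :> C) // !expr0 !big_ord0; by field.
  have hM : M n.+1 = (lam * A ^+ n.+1 - (n.+1)%:R * M n) / (lam + (n.+1)%:R * n%:R / 2).
    rewrite -(hrec n); field => //; rewrite gt_eqF // ltr_pwDl ?mulr_gt0 ?ltr0n ?mulr_ge0 ?addr_ge0 ?ler0n //.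
  rewrite hM IH PQ PQ [X in _ = _ * X]big_ord_recr /= cQ.
  set s := \sum_(i < n.+1) _.
  have hA2 : (- A / 2) ^+ n.+1 = A ^+ n.+1 / (-2) ^+ n.+1.
    by rewrite -expr_div_n; congr (_ ^+ _); field.
  rewrite hA2 factS natrM /P big_ord_recr /= -/(P n) !exprS.
  have u0 : (-2 : C) ^+ n != 0 by rewrite expf_neq0 // oppr_eq0.
  have t0 : (2 : C) ^+ n != 0 by rewrite expf_neq0.
  have f0 : (n`!)%:R != 0 :> C by rewrite pnatr_eq0 -lt0n fact_gt0.
  have n0 : (n.+1)%:R != 0 :> C by rewrite pnatr_eq0.
  have n1 : 1 + n%:R != 0 :> C by rewrite addrC -natrS.
  have c2 : lam * 2 + (1 + n%:R) * n%:R != 0.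
    by rewrite gt_eqF // ltr_pwDl ?mulr_gt0 ?ltr0n ?mulr_ge0 ?addr_ge0 ?ler0n //.
  have := coef0 n; have := P0 n.
  move: ((-2 : C) ^+ n) ((2:C) ^+ n) (A ^+ n.+1) s (P n) u0 t0 => u t w s' p u0' t0' p0 c0.
  field; by rewrite u0' f0 n1 c2 p0 t0'.
have e : lam * M 1%N = lam * A - 1.
  by rewrite -[A in RHS]expr1 -(hrec 0%N) hM0; ring.
have -> : M 1%N = (lam * M 1%N) / lam by field.
by rewrite e; field.
Qed.
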